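(* Let $v_1,\dots,v_m$ be nonzero vectors spanning $\mathbb{R}^n$ ($m\ge n$), and let $c=(c_i)_{i=1}^m$ with $c_i>0$ and $\sum_i c_i=n$. Define $\phi:\mathbb{R}^m\to\mathbb{R}$ by $\phi(x_1,\dots,x_m)=\log\det\big(\sum_{i=1}^m e^{x_i}v_i\otimes v_i\big)$, and let $\phi^*(y)=\sup_{x\in\mathbb{R}^m}(\langle y,x\rangle-\phi(x))$ be its Fenchel conjugate, with $\mathrm{dom}(\phi^* )=\{y;\ \phi^*(y)<+\infty\}$. Let $D_c=\inf\{\det(\sum_i\lambda_iv_i\otimes v_i)/\prod_i\lambda_i^{c_i};\ \lambda_i>0\}$ and $K=\mathrm{conv}\{1_I;\ |I|=n,\ d_I\ne0\}$. Then: (1) $\phi$ is convex; (2) $D_c=\exp(-\phi^*(c))$ (with $\exp(-\infty)=0$); (3) $D_c>0$ if and only if $c\in\mathrm{dom}(\phi^* )$; (4) the infimum $D_c$ is attained if and only if the supremum defining $\phi^*(c)$ is attained; (5) $\mathrm{dom}(\phi^* )=K$; (6) $D_c$ is attained whenever $c$ belongs to the relative interior of $K$.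
   Context: For $I\subset\{1,\dots,m\}$ with $|I|=n$: $d_I=\det((v_i)_{i\in I})^2$ and $1_I\in\mathbb{R}^m$ is the indicator vector of $I$. $v\otimes v=vv^T$. *)

(* Defs.v *)
From HB Require Import structures.
From mathcomp Require Import all_boot all_order all_algebra.
From mathcomp Require Import all_classical all_reals all_analysis.
Set Implicit Arguments. Unset Strict Implicit. Unset Printing Implicit Defensive.
Import Order.TTheory GRing.Theory Num.Theory.
Local Open Scope classical_set_scope.
Local Open Scope ring_scope.

Section Defs.
Variables (R : realType) (n m : nat) (v : 'I_m -> 'cV[R]_n).

Definition tens (u : 'cV[R]_n) : 'M[R]_n := u *m u^T.

Definition dotm (y x : 'rV[R]_m) : R := \sum_(i < m) y 0 i * x 0 i.

Definition phi (x : 'rV[R]_m) : R :=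
  ln (\det (\sum_(i < m) expR (x 0 i) *: tens (v i))).

Definition phistar (y : 'rV[R]_m) : \bar R :=
  ereal_sup (range (fun x : 'rV[R]_m => (dotm y x - phi x)%:E)).

Definition Dratio (c lam : 'rV[R]_m) : R :=
  \det (\sum_(i < m) lam 0 i *: tens (v i)) / \prod_(i < m) (lam 0 i `^ c 0 i).

Definition posvec (lam : 'rV[R]_m) : Prop := forall i, 0 < lam 0 i.

Definition Dc (c : 'rV[R]_m) : R := inf [set Dratio c lam | lam in posvec].

(* d_I = det((v_i)_{i in I})^2, columns in increasing order of i;
   only meaningful (and only used) when #|I| = n. *)
Definition dI (I : {set 'I_m}) : R :=
  (\det (\matrix_(k < n, j < n) nth 0 [seq v i k 0 | i <- enum I] j)) ^+ 2.

Definition ind (I : {set 'I_m}) : 'rV[R]_m := \row_(i < m) ((i \in I)%:R).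

Definition admissible (I : {set 'I_m}) : bool := (#|I| == n) && (dI I != 0).

Definition K : set 'rV[R]_m :=
  [set y | exists w : {set 'I_m} -> R,
     [/\ forall I, 0 <= w I, forall I, ~~ admissible I -> w I = 0,
         \sum_I w I = 1 & y = \sum_I w I *: ind I]].

Definition affK : set 'rV[R]_m :=
  [set y | exists w : {set 'I_m} -> R,
     [/\ forall I, ~~ admissible I -> w I = 0,
         \sum_I w I = 1 & y = \sum_I w I *: ind I]].

(* relative interior of K (interior relative to its affine hull, for the
   usual topology of R^m, described via sup-norm balls) *)
Definition relint_K : set 'rV[R]_m :=
  [set c | K c /\ exists e : R, 0 < e /\
     forall y, affK y -> (forall i, `|y 0 i - c 0 i| < e) -> K y].

End Defs.

(* Main.v *)
Require Import Defs.
From HB Require Import structures.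
From mathcomp Require Import all_boot all_order all_algebra fingroup perm.
From mathcomp Require Import all_classical all_reals all_analysis.
From mathcomp Require Import ring lra.
Set Implicit Arguments. Unset Strict Implicit. Unset Printing Implicit Defensive.
Import Order.TTheory GRing.Theory Num.Theory.
Local Open Scope classical_set_scope.
Local Open Scope ring_scope.


Section CB.
Variables (R : realType) (n m : nat) (v : 'I_m -> 'cV[R]_n).

Definition Wm (g : 'I_n -> 'I_m) : 'M[R]_n := \matrix_(k, j) v (g j) k 0.

Lemma det_col_perm (s : 'S_n) (A : 'M[R]_n) :
  \det (col_perm s A) = (-1) ^+ s * \det A.
Proof. by rewrite col_permE det_mulmx det_perm odd_permV mulrC. Qed.

Lemma Wm_perm (g : 'I_n -> 'I_m) (s : 'S_n) :
  Wm (fun j => g (s j)) = col_perm s (Wm g).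
Proof. by apply/matrixP => i j; rewrite !mxE. Qed.

Lemma Wm_noninj (g : 'I_n -> 'I_m) : ~~ injectiveb g -> \det (Wm g) = 0.
Proof.
move=> /injectiveP ng.
have [i1 [i2 [e ne]]] : exists i1 i2, g i1 = g i2 /\ i1 != i2.
  apply: contrapT => H; apply: ng => a b eab; apply/eqP; apply: contrapT => nab.
  by apply: H; exists a, b; split => //; apply/negP.
rewrite -det_tr; apply: (determinant_alternate ne) => k.
by rewrite !mxE e.
Qed.


Definition Mx (l : 'I_m -> R) : 'M[R]_n := \sum_(i < m) l i *: tens (v i).

Lemma MxE l r k : Mx l r k = \sum_(i < m) l i * (v i r 0 * v i k 0).
Proof.
rewrite /Mx summxE; apply: eq_bigr => i _.
by rewrite !mxE big_ord1 !mxE.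
Qed.

Definition aa (l : 'I_m -> R) (f : 'I_n -> 'I_m) := \prod_r (l (f r) * v (f r) r 0).

Lemma det_Mx1 l : \det (Mx l) = \sum_(f : {ffun 'I_n -> 'I_m}) aa l f * \det (Wm f).
Proof.
under [RHS]eq_bigr do rewrite -det_tr.
rewrite /determinant.
transitivity (\sum_(s : 'S_n) \sum_(f : {ffun 'I_n -> 'I_m})
   (-1) ^+ s * (aa l f * \prod_r v (f r) (s r) 0)).
  apply: eq_bigr => s _; rewrite -mulr_sumr; congr (_ * _).
  under eq_bigr do rewrite MxE.
  rewrite bigA_distr_bigA; apply: eq_bigr => f _.
  rewrite /aa -big_split /=; apply: eq_bigr => r _; by rewrite !mulrA.
rewrite exchange_big; apply: eq_bigr => f _.
rewrite mulr_sumr; apply: eq_bigr => s _.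
rewrite mulrCA; congr (_ * (_ * _)); apply: eq_bigr => r _.
by rewrite !mxE.
Qed.


Lemma det_Mx2 l : n`!%:R * \det (Mx l) =
  \sum_(f : {ffun 'I_n -> 'I_m}) (\prod_r l (f r)) * \det (Wm f) ^+ 2.
Proof.
have hinj (s : 'S_n) : injective (fun f : {ffun 'I_n -> 'I_m} => [ffun r => f (s r)]).
  move=> f g /ffunP e; apply/ffunP => r.
  by have := e (s^-1 r)%g; rewrite !ffunE permKV.
have eT (s : 'S_n) : \det (Mx l) =
   \sum_(f : {ffun 'I_n -> 'I_m}) aa l (fun r => f (s r)) * ((-1) ^+ s * \det (Wm f)).
  rewrite det_Mx1 (reindex_inj (hinj s)); apply: eq_bigr => f _.
  have -> : Wm [ffun r => f (s r)] = Wm (fun r => f (s r)).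
    by apply/matrixP => i j; rewrite !mxE ffunE.
  rewrite Wm_perm det_col_perm; congr (_ * _).
  by rewrite /aa; apply: eq_bigr => r _; rewrite ffunE.
have -> : n`!%:R * \det (Mx l) = \sum_(s : 'S_n) \det (Mx l).
  by rewrite sumr_const card_Sn mulr_natl.
under eq_bigr => s _ do rewrite (eT s).
rewrite exchange_big; apply: eq_bigr => f _.
transitivity (\det (Wm f) * \sum_(s : 'S_n) (-1) ^+ s * aa l (fun r => f (s r))).
  rewrite mulr_sumr; apply: eq_bigr => s _; by rewrite mulrCA mulrA [_ * \det _]mulrC.
have -> : \sum_(s : 'S_n) (-1) ^+ s * aa l (fun r => f (s r)) =
   (\prod_r l (f r)) * \det (Wm f).
  rewrite /(\det (Wm f)) mulr_sumr; apply: eq_bigr => s _.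
  rewrite /aa big_split /= [\prod_r l (f r)](reindex_inj (@perm_inj _ s)) /=.
  rewrite mulrCA; congr (_ * (_ * _)); apply: eq_bigr => r _; by rewrite mxE.
by rewrite mulrCA expr2.
Qed.


Lemma perm_dI (f : {ffun 'I_n -> 'I_m}) : injective f ->
  \det (Wm f) ^+ 2 = dI v (f @: [set: 'I_n]%SET).
Proof.
move=> finj; set I := f @: _.
have cI : #|I| = n.
  rewrite /I card_in_imset; first by rewrite cardsT card_ord.
  by move=> a b _ _; apply: finj.
have sz : size (enum I) == n by rewrite -cardE cI.
pose t := Tuple sz.
have pe : perm_eq (map f (enum 'I_n)) t.
  apply: uniq_perm; first by rewrite map_inj_uniq // enum_uniq.
    exact: enum_uniq.
  move=> x; rewrite /= mem_enum; apply/mapP/imsetP => [[r _ ->]|[r _ ->]];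
    by exists r; rewrite ?mem_enum ?in_setT.
case/tuple_permP: pe => p ep.
have fE : forall r, f r = tnth t (p r).
  move=> r; move: ep; rewrite /= -val_ord_tuple => /eq_in_map; apply.
  by rewrite val_ord_tuple mem_enum.
have -> : Wm f = Wm (fun j => tnth t (p j)).
  by apply/matrixP => i j; rewrite !mxE fE.
rewrite Wm_perm det_col_perm exprMn sqrr_sign mul1r /dI.
congr (\det _ ^+ 2); apply/matrixP => k j; rewrite !mxE.
have jl : (j < size (enum I))%N by rewrite (eqP sz).
rewrite (nth_map (tnth t j)) // (tnth_nth (tnth t j)).
by congr (v _ k 0); apply: set_nth_default.
Qed.


Definition NI (I : {set 'I_m}) : nat :=
  #|[set f : {ffun 'I_n -> 'I_m} | injectiveb f && (f @: [set: 'I_n]%SET == I)]%SET|.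
Definition cI (I : {set 'I_m}) : R := (NI I)%:R / n`!%:R * dI v I.

Lemma det_Mx l : \det (Mx l) = \sum_(I : {set 'I_m}) cI I * \prod_(i in I) l i.
Proof.
have nf : n`!%:R != 0 :> R by rewrite pnatr_eq0 -lt0n fact_gt0.
apply: (mulfI nf); rewrite det_Mx2 mulr_sumr.
rewrite (partition_big (fun f : {ffun 'I_n -> 'I_m} => f @: [set: 'I_n]%SET) predT) //=.
apply: eq_bigr => I _.
transitivity (\sum_(f : {ffun 'I_n -> 'I_m} | f @: [set: 'I_n]%SET == I)
   if injectiveb f then dI v I * \prod_(i in I) l i else 0).
  apply: eq_bigr => f /eqP kf; case: injectiveP => fi.
    rewrite perm_dI // kf mulrC; congr (_ * _).
    rewrite -kf big_imset /=; last by move=> a b _ _; apply: fi.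
    by apply: eq_bigl => r; rewrite inE.
  by rewrite Wm_noninj ?expr0n ?mulr0 //; apply/injectiveP.
rewrite -big_mkcondr /=.
rewrite (eq_bigl (fun f => f \in [set f : {ffun 'I_n -> 'I_m} | injectiveb f && (f @: [set: 'I_n]%SET == I)]%SET)); last first.
  by move=> f; rewrite !inE andbC.
rewrite sumr_const /cI -/(NI I) -[(_ * _) *+ _]mulr_natl.
by rewrite [RHS]mulrA [n`!%:R * (_ * _)]mulrA [n`!%:R * _]mulrCA mulfV // mulr1 mulrA.
Qed.


End CB.


Section Basic.
Variables (R : realType) (n m : nat) (v : 'I_m -> 'cV[R]_n).

Lemma cI_ge0 I : 0 <= cI v I.
Proof. by rewrite /cI /dI mulr_ge0 ?divr_ge0 ?ler0n ?sqr_ge0. Qed.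

Lemma cI_neq0 I : (cI v I != 0) = admissible v I.
Proof.
have nf : n`!%:R != 0 :> R by rewrite pnatr_eq0 -lt0n fact_gt0.
rewrite /cI /admissible !mulf_eq0 negb_or invr_eq0 (negbTE nf) orbF.
rewrite pnatr_eq0; congr (_ && _).
apply/idP/idP.
  rewrite -lt0n => /card_gt0P [f]; rewrite inE => /andP [/injectiveP fi /eqP <-].
  by rewrite card_in_imset ?cardsT ?card_ord // => a b _ _; apply: fi.
move=> /eqP cI; rewrite -lt0n; apply/card_gt0P.
have sz : size (enum I) == n by rewrite -cardE cI.
pose t := Tuple sz.
have ti : injective (tnth t) by apply/tuple_uniqP; exact: enum_uniq.
exists [ffun r => tnth t r]; rewrite inE; apply/andP; split.
  by apply/injectiveP => a b; rewrite !ffunE; apply: ti.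
apply/eqP/setP => x; apply/imsetP/idP => [[r _ ->]|xI].
  by rewrite ffunE -(mem_enum (mem I)); apply: (mem_tnth r t).
have : x \in t by rewrite /= mem_enum.
by case/tnthP => r ->; exists r; rewrite ?ffunE ?inE.
Qed.

Hypothesis hfull : row_full (\matrix_(i < m) (v i)^T).

Lemma exists_adm : exists I, admissible v I.
Proof.
set V := \matrix_(i < m) (v i)^T.
have eM : Mx v (fun _ => 1) = V^T *m V.
  apply/matrixP => r k; rewrite MxE !mxE; apply: eq_bigr => i _.
  by rewrite !mxE mul1r.
have dne : \det (Mx v (fun _ => 1)) != 0.
  apply/negP => /eqP d0.
  have : ~~ row_free (V^T *m V).
    by rewrite row_free_unit unitmxE unitfE -eM d0 eqxx.
  rewrite -kermx_eq0 => kne.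
  have [i ri] : exists i, row i (kermx (V^T *m V)) != 0.
    apply: contrapT => H; move/negP: kne; apply; apply/eqP/row_matrixP => i.
    by rewrite row0; apply/eqP; apply: contrapT => /negP hh; apply: H; exists i.
  set x := row i _ in ri.
  have x0 : x *m (V^T *m V) = 0 by rewrite -row_mul mulmx_ker row0.
  set y := x *m V^T.
  have yy : y *m y^T = 0 by rewrite trmx_mul trmxK mulmxA -(mulmxA x) x0 mul0mx.
  have y0 : y = 0.
    apply/rowP => j; rewrite mxE.
    have := congr1 (fun M : 'M[R]_(1,1) => M 0 0) yy; rewrite !mxE => /eqP.
    rewrite psumr_eq0 => [/allP /(_ j (mem_index_enum j))|k _].
      by rewrite !mxE mulf_eq0 orbb => /eqP.
    by rewrite !mxE -expr2 sqr_ge0.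
  have rf : row_free V^T by rewrite /row_free mxrank_tr.
  move: ri; rewrite -(mulmx_free_eq0 _ rf) -/y y0 eqxx //.
rewrite det_Mx in dne.
apply: contrapT => H; move/negP: dne; apply; apply/eqP; apply: big1 => I _.
have : cI v I == 0 by apply: contrapT => /negP; rewrite cI_neq0 => a; apply: H; exists I.
by move/eqP ->; rewrite mul0r.
Qed.

End Basic.


Lemma expR_conv (R : realType) (t u w : R) : 0 <= t -> t <= 1 ->
  expR (t * u + (1 - t) * w) <= t * expR u + (1 - t) * expR w.
Proof.
move=> t0 t1; set z := t * u + (1 - t) * w.
have h (a : R) : expR z * (1 + (a - z)) <= expR a.
  have -> : expR a = expR z * expR (a - z) by rewrite -expRD addrC subrK.
  by rewrite ler_wpM2l ?expR_ge0 ?expR_ge1Dx.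
have h1 := h u; have h2 := h w.
have e : expR z = t * (expR z * (1 + (u - z))) + (1 - t) * (expR z * (1 + (w - z))).
  rewrite /z; ring.
rewrite [X in X <= _]e; apply: lerD; apply: ler_wpM2l => //; lra.
Qed.

Section Fx.
Variables (R : realType) (n m : nat) (v : 'I_m -> 'cV[R]_n).

Definition Fx (x : 'rV[R]_m) := \sum_(I : {set 'I_m}) cI v I * expR (dotm (ind R I) x).

Lemma dot_ind (I : {set 'I_m}) (x : 'rV[R]_m) : dotm (ind R I) x = \sum_(i in I) x 0 i.
Proof.
rewrite /dotm [RHS]big_mkcond /=; apply: eq_bigr => i _; rewrite mxE.
by case: (i \in I); rewrite ?mul1r ?mul0r.
Qed.

Lemma dotmDr (y a b : 'rV[R]_m) (s t : R) :
  dotm y (s *: a + t *: b) = s * dotm y a + t * dotm y b.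
Proof.
rewrite /dotm !mulr_sumr -big_split /=; apply: eq_bigr => i _; rewrite !mxE; ring.
Qed.

Lemma dotmDl (a b x : 'rV[R]_m) (s t : R) :
  dotm (s *: a + t *: b) x = s * dotm a x + t * dotm b x.
Proof.
rewrite /dotm !mulr_sumr -big_split /=; apply: eq_bigr => i _; rewrite !mxE; ring.
Qed.

Lemma dotm_suml (T : finType) (w : T -> R) (a : T -> 'rV[R]_m) x :
  dotm (\sum_(j : T) w j *: a j) x = \sum_(j : T) w j * dotm (a j) x.
Proof.
rewrite /dotm; under eq_bigr do rewrite summxE mulr_suml.
rewrite exchange_big; apply: eq_bigr => j _; rewrite mulr_sumr.
by apply: eq_bigr => i _; rewrite !mxE mulrA.
Qed.

Lemma detE_exp (x : 'rV[R]_m) : \det (\sum_(i < m) expR (x 0 i) *: tens (v i)) = Fx x.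
Proof.
have -> : \sum_(i < m) expR (x 0 i) *: tens (v i) = Mx v (fun i => expR (x 0 i)) by [].
rewrite det_Mx; apply: eq_bigr => I _; by rewrite dot_ind expR_sum.
Qed.

Lemma phiE (x : 'rV[R]_m) : phi v x = ln (Fx x).
Proof. by rewrite /phi detE_exp. Qed.

Lemma Fx_ge (I : {set 'I_m}) (x : 'rV[R]_m) : cI v I * expR (dotm (ind R I) x) <= Fx x.
Proof.
rewrite /Fx (bigD1 I) //= lerDl; apply: sumr_ge0 => J _.
by rewrite mulr_ge0 ?cI_ge0 ?expR_ge0.
Qed.

Lemma Fx_ge0 (x : 'rV[R]_m) : 0 <= Fx x.
Proof. by apply: sumr_ge0 => J _; rewrite mulr_ge0 ?cI_ge0 ?expR_ge0. Qed.

Hypothesis hfull : row_full (\matrix_(i < m) (v i)^T).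

Lemma Fx_gt0 (x : 'rV[R]_m) : 0 < Fx x.
Proof.
have [I aI] := exists_adm hfull.
apply: lt_le_trans (Fx_ge I x).
rewrite mulr_gt0 ?expR_gt0 // lt_def cI_neq0 aI /=; exact: cI_ge0.
Qed.

Lemma phi_convex (x y : 'rV[R]_m) (t : R) : 0 <= t -> t <= 1 ->
  phi v (t *: x + (1 - t) *: y) <= t * phi v x + (1 - t) * phi v y.
Proof.
move=> t0 t1; rewrite !phiE.
set p := Fx x; set q := Fx y; set E := expR (t * ln p + (1 - t) * ln q).
have p0 : 0 < p by apply: Fx_gt0. have q0 : 0 < q by apply: Fx_gt0.
suff : Fx (t *: x + (1 - t) *: y) <= E.
  move=> h; rewrite -(expRK (t * ln p + (1 - t) * ln q)) ler_ln ?posrE ?Fx_gt0 ?expR_gt0 //.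
apply: (@le_trans _ _ (\sum_(I : {set 'I_m}) (E * t / p * (cI v I * expR (dotm (ind R I) x)) +
    E * (1 - t) / q * (cI v I * expR (dotm (ind R I) y))))).
  apply: ler_sum => I _; rewrite dotmDr.
  set a := dotm (ind R I) x; set b := dotm (ind R I) y.
  have -> : expR (t * a + (1 - t) * b) =
     E * expR (t * (a - ln p) + (1 - t) * (b - ln q)).
    by rewrite /E -expRD; congr expR; ring.
  have hc := expR_conv (a - ln p) (b - ln q) t0 t1.
  rewrite !expRB !lnK ?posrE // in hc.
  have c0 := cI_ge0 v I.
  have E0 : 0 <= E by apply: expR_ge0.
  apply: (@le_trans _ _ (cI v I * (E * (t * (expR a / p) + (1 - t) * (expR b / q))))).
    by rewrite ler_wpM2l // ler_wpM2l.
  by rewrite le_eqVlt; apply/orP; left; apply/eqP; ring.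
rewrite big_split /= -!mulr_sumr -/p -/q -/(Fx x) -/(Fx y) -/p -/q.
rewrite -!mulrA mulVf ?lt0r_neq0 // mulVf ?lt0r_neq0 // !mulr1 -mulrDr.
by rewrite addrC subrK mulr1.
Qed.

End Fx.


Section SupInf.
Variables (R : realType) (T : Type) (G : T -> R) (x0 : T).

Let P := ereal_sup (range (fun x => (G x)%:E)).
Let S := range (fun x => expR (- G x)).

Lemma P_ge x : ((G x)%:E <= P)%E.
Proof. by apply: ereal_sup_ubound; exists x. Qed.

Lemma P_ninf : P <> -oo%E.
Proof. by move=> e; have := P_ge x0; rewrite e. Qed.

Lemma S_lb x : inf S <= expR (- G x).
Proof.
apply: ge_inf; last by exists x.
by exists 0 => _ [y _ <-]; apply: expR_ge0.
Qed.

Lemma S_ne : S !=set0. Proof. by exists (expR (- G x0)), x0. Qed.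

Lemma inf_ge0 : 0 <= inf S.
Proof. by apply: lb_le_inf; [exact: S_ne | move=> _ [y _ <-]; apply: expR_ge0]. Qed.

Lemma H1 M : (M%:E < P)%E -> inf S < expR (- M).
Proof.
move=> /ereal_sup_gt [_ [x _ <-]]; rewrite lte_fin => Mx.
by apply: le_lt_trans (S_lb x) _; rewrite ltr_expR ltrN2.
Qed.

Lemma infS_E : (inf S)%:E = expeR (- P)%E.
Proof.
case eP : P => [r| |]; last by have := P_ninf.
- have ub x : G x <= r by rewrite -lee_fin -eP P_ge.
  rewrite /=; congr (_%:E); apply/eqP; rewrite eq_le; apply/andP; split.
    rewrite leNgt; apply/negP => lt.
    have ip : 0 < inf S by apply: lt_trans lt; apply: expR_gt0.
    suff : inf S < inf S by rewrite ltxx.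
    have h := @H1 (- ln (inf S)); rewrite opprK lnK ?posrE // in h; apply: h.
    rewrite eP lte_fin ltrNl -(expRK (- r)) ltr_ln ?posrE ?expR_gt0 //.
  apply: lb_le_inf; first exact: S_ne.
  by move=> _ [y _ <-]; rewrite ler_expR lerN2.
- rewrite /=; congr (_%:E); apply/eqP; rewrite eq_le inf_ge0 andbT leNgt; apply/negP => ip.
  suff : inf S < inf S by rewrite ltxx.
    have h := @H1 (- ln (inf S)); rewrite opprK lnK ?posrE // in h; apply: h.
  by rewrite eP ltry.
Qed.

Lemma infS_pos : 0 < inf S <-> (P < +oo)%E.
Proof.
have := infS_E; case eP : P => [r| |] /= e; last by have := P_ninf.
- by move: e => [->]; split => _; [rewrite ltry | apply: expR_gt0].
- by move: e => [->]; rewrite !ltxx.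
Qed.

Lemma infS_att : (exists x, expR (- G x) = inf S) <-> (exists x, P = (G x)%:E).
Proof.
split => [[x ex]|[x ex]]; exists x.
  apply/eqP; rewrite eq_le P_ge andbT; apply: ge_ereal_sup => _ [y _ <-].
  rewrite lee_fin -lerN2 -ler_expR ex; exact: S_lb.
by have := infS_E; rewrite ex /= => -[].
Qed.

End SupInf.


Section Link.
Variables (R : realType) (n m : nat) (v : 'I_m -> 'cV[R]_n).
Hypothesis hfull : row_full (\matrix_(i < m) (v i)^T).

Definition gc (c x : 'rV[R]_m) := dotm c x - phi v x.

Lemma Dratio_exp (c x : 'rV[R]_m) : Dratio v c (\row_i expR (x 0 i)) = expR (- gc c x).
Proof.
rewrite /Dratio.
have -> : \sum_(i < m) (\row_j expR (x 0 j)) 0 i *: tens (v i) =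
          \sum_(i < m) expR (x 0 i) *: tens (v i).
  by apply: eq_bigr => i _; rewrite mxE.
rewrite detE_exp.
have -> : \prod_(i < m) ((\row_j expR (x 0 j)) 0 i `^ c 0 i) = expR (dotm c x).
  rewrite /dotm expR_sum; apply: eq_bigr => i _.
  by rewrite mxE /powR expR_eq0 expRK.
have hF := Fx_gt0 hfull x.
by rewrite -[Fx v x](@lnK _ (Fx v x)) ?posrE // -expRB /gc phiE opprB.
Qed.

Lemma Dset (c : 'rV[R]_m) :
  [set Dratio v c lam | lam in @posvec R m] = range (fun x => expR (- gc c x)).
Proof.
apply/seteqP; split => _ [lam hl <-].
  exists (\row_i ln (lam 0 i)) => //; rewrite -Dratio_exp; congr Dratio.
  by apply/rowP => i; rewrite !mxE lnK // posrE.
exists (\row_i expR (lam 0 i)); last exact: Dratio_exp.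
by move=> i; rewrite mxE expR_gt0.
Qed.

Lemma part2 (c : 'rV[R]_m) : (Dc v c)%:E = expeR (- phistar v c)%E.
Proof. by rewrite /Dc Dset; apply: (infS_E _ 0). Qed.

Lemma part3 (c : 'rV[R]_m) : 0 < Dc v c <-> (phistar v c < +oo)%E.
Proof. by rewrite /Dc Dset; apply: (infS_pos _ 0). Qed.

Lemma part4 (c : 'rV[R]_m) :
  (exists lam, posvec lam /\ Dratio v c lam = Dc v c) <->
  (exists x, phistar v c = (dotm c x - phi v x)%:E).
Proof.
rewrite -(infS_att (gc c) 0) /Dc Dset; split.
  move=> [lam [hl <-]]; exists (\row_i ln (lam 0 i)); rewrite -Dratio_exp.
  by congr Dratio; apply/rowP => i; rewrite !mxE lnK // posrE.
move=> [x ex]; exists (\row_i expR (x 0 i)); split; last by rewrite Dratio_exp.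
by move=> i; rewrite mxE expR_gt0.
Qed.

End Link.

Import numFieldNormedType.Exports.


Lemma cont_sum (R : realType) (T : topologicalType) (I : Type) (r : seq I)
   (F : I -> T -> R) :
  (forall i, continuous (F i)) -> continuous (fun x => \sum_(i <- r) F i x).
Proof.
move=> hF; elim: r => [|a r IH].
  under eq_fun do rewrite big_nil; exact: cst_continuous.
under eq_fun do rewrite big_cons.
by move=> x; apply: continuousD; [apply: hF | apply: IH].
Qed.

Lemma cont_coord (R : realType) k (j : 'I_k) :
  continuous (fun w : 'rV[R]_k => w 0 j).
Proof. exact: coord_continuous. Qed.

Section Five.
Variables (R : realType) (n m : nat) (v : 'I_m -> 'cV[R]_n).
Hypothesis hfull : row_full (\matrix_(i < m) (v i)^T).

Lemma dotmC (a b : 'rV[R]_m) : dotm a b = dotm b a.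
Proof. by apply: eq_bigr => i _; rewrite mulrC. Qed.

Lemma dotmZr (a b : 'rV[R]_m) (t : R) : dotm a (t *: b) = t * dotm a b.
Proof. by rewrite /dotm mulr_sumr; apply: eq_bigr => i _; rewrite mxE; ring. Qed.

Lemma K_bounded y : K v y -> (phistar v y < +oo)%E.
Proof.
case=> w [w0 wn w1 ->].
set B := - \sum_I w I * ln (cI v I).
apply: (@le_lt_trans _ _ B%:E); last exact: ltry.
apply: ge_ereal_sup => _ [x _ <-]; rewrite lee_fin dotm_suml phiE.
have hF := Fx_gt0 hfull x.
have e1 : ln (Fx v x) = \sum_I w I * ln (Fx v x) by rewrite -mulr_suml w1 mul1r.
rewrite e1 /B -sumrN -sumrN -big_split /=; apply: ler_sum => I _.
case aI : (admissible v I); last by rewrite wn ?aI // !mul0r subrr oppr0.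
have cp : 0 < cI v I by rewrite lt_def cI_neq0 aI cI_ge0.
have : ln (cI v I) + dotm (ind R I) x <= ln (Fx v x).
  have cp2 : 0 < cI v I * expR (dotm (ind R I) x) by rewrite mulr_gt0 ?expR_gt0.
  rewrite -[dotm _ x]expRK -lnM ?posrE ?expR_gt0 // ler_ln ?posrE //.
  exact: Fx_ge.
move=> h; have wI0 := w0 I.
rewrite -mulrBr -mulrN; apply: ler_wpM2l => //; lra.
Qed.

Lemma unbounded_notK y :
  (exists z : 'rV[R]_m, exists d, 0 < d /\
     forall J, admissible v J -> dotm (ind R J) z + d <= dotm y z) ->
  ~ (phistar v y < +oo)%E.
Proof.
move=> [z [d [d0 hz]]] hl.
have hub x : ((dotm y x - phi v x)%:E <= phistar v y)%E by apply: ereal_sup_ubound; exists x.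
case eP : (phistar v y) hl hub => [r| |] // _ hub; last first.
  by have := hub 0; rewrite leeNy_eq.
set C := \sum_(I : {set 'I_m}) cI v I.
have [I0 aI0] := exists_adm hfull.
have C0 : 0 < C.
  apply: lt_le_trans (_ : cI v I0 <= C).
    by rewrite lt_def cI_neq0 aI0 cI_ge0.
  by rewrite /C (bigD1 I0) //= lerDl sumr_ge0 // => J _; rewrite cI_ge0.
set t := (`|r| + `|ln C| + 1) / d.
have t0 : 0 <= t by rewrite divr_ge0 ?ltW //; apply: addr_ge0 => //; apply: addr_ge0.
have := hub (t *: z); rewrite lee_fin phiE.
have hF : Fx v (t *: z) <= C * expR (t * (dotm y z - d)).
  rewrite /Fx /C mulr_suml; apply: ler_sum => J _.
  case aJ : (admissible v J); last first.
    have cz : cI v J = 0 by apply/eqP; apply: contraFT aJ; rewrite cI_neq0.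
    by rewrite cz !mul0r.
  apply: ler_wpM2l; first exact: cI_ge0.
  rewrite ler_expR dotmZr; apply: ler_wpM2l => //.
  by rewrite lerBrDr; apply: hz.
have hF0 := Fx_gt0 hfull (t *: z).
have : ln (Fx v (t *: z)) <= ln C + t * (dotm y z - d).
  have cp2 : 0 < C * expR (t * (dotm y z - d)) by rewrite mulr_gt0 ?expR_gt0.
  by rewrite -[X in _ <= _ + X]expRK -lnM ?posrE ?expR_gt0 // ler_ln ?posrE.
rewrite dotmZr.
have td : t * d = `|r| + `|ln C| + 1 by rewrite /t mulrAC -mulrA mulfV ?mulr1 // lt0r_neq0.
have := ler_norm r; have := ler_norm (ln C).
move=> h1 h2 h3 h4; nra.
Qed.

End Five.


Section Sep.
Variables (R : realType) (n m : nat) (v : 'I_m -> 'cV[R]_n).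
Hypothesis hfull : row_full (\matrix_(i < m) (v i)^T).

Let N := #|{set 'I_m}|.
Let ev (j : 'I_N) : {set 'I_m} := enum_val j.

Lemma sum_ev (F : {set 'I_m} -> R) : \sum_I F I = \sum_(j : 'I_N) F (ev j).
Proof. by rewrite (reindex ev) //; apply: onW_bij; exact: enum_val_bij. Qed.

Variable y : 'rV[R]_m.

Let cij (j : 'I_N) (i : 'I_m) : R := ind R (ev j) 0 i.
Let q (w : 'rV[R]_N) (i : 'I_m) : R := \sum_j w 0 j * cij j i.
Let h (w : 'rV[R]_N) : R := \sum_(i < m) (y 0 i - q w i) ^+ 2.
Let Aj (j : 'I_N) : set R :=
  if admissible v (ev j) then [set x : R | 0 <= x] else [set x : R | x = 0].
Let Dl : set 'rV[R]_N :=
  [set w | (forall j, Aj j (w 0 j)) /\ \sum_j w 0 j = 1].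

Lemma q_cont i : continuous (fun w => q w i).
Proof.
apply: cont_sum => j w; apply: continuousM; first exact: cont_coord.
exact: cst_continuous.
Qed.

Lemma h_cont : continuous h.
Proof.
have hcw i : continuous (fun u => y 0 i - q u i).
  by move=> w; apply: continuousB; [exact: cst_continuous | exact: q_cont].
apply: cont_sum => i w; rewrite /GRing.exp /=.
exact: continuousM (hcw i w) (hcw i w).
Qed.

Lemma Dl_closed : closed Dl.
Proof.
have -> : Dl = (\bigcap_(j in setT) ((fun w : 'rV[R]_N => w 0 j) @^-1` Aj j)) `&`
               ((fun w : 'rV[R]_N => \sum_j w 0 j) @^-1` [set x | x = 1]).
  apply/seteqP; split => w [h1 h2]; split => //.
    by move=> j _; apply: h1.
  by move=> j; apply: h1.
apply: closedI.
  apply: closed_bigI => j _; apply: preimage_closed.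
    by move=> w _; apply: cont_coord.
  by rewrite /Aj; case: ifP => _; [exact: closed_ge | exact: closed_eq].
apply: preimage_closed; last exact: closed_eq.
by move=> w _; apply: cont_sum => j; apply: cont_coord.
Qed.

Lemma Dl_compact : compact Dl.
Proof.
have Mnco : compact
    [set w : 'rV[R]_N | forall i, w ord0 i \in `[(0:R), 1]].
  apply: (@rV_compact _  _ (fun=> `[(0:R), 1]%classic)).
  by move=> _; apply: segment_compact.
apply: subclosed_compact Dl_closed Mnco _ => w [hA h1] j /=; rewrite in_itv /=.
have w0 k : 0 <= w 0 k by have := hA k; rewrite /Aj; case: ifP => _ // ->.
apply/andP; split; first exact: w0.
rewrite -h1 (bigD1 j) //= lerDl; apply: sumr_ge0 => k _; exact: w0.
Qed.

Let e (J : {set 'I_m}) : 'rV[R]_N := \row_j (j == enum_rank J)%:R.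

Lemma sum_e J (F : 'I_N -> R) : \sum_j e J 0 j * F j = F (enum_rank J).
Proof.
rewrite (bigD1 (enum_rank J)) //= big1 ?addr0; first by rewrite mxE eqxx mul1r.
by move=> j /negPf nj; rewrite mxE nj mul0r.
Qed.

Lemma e_in J : admissible v J -> Dl (e J).
Proof.
move=> aJ; split.
  move=> j; rewrite /Aj mxE; case: eqP => [->|_].
    by rewrite /ev enum_rankK aJ /=.
  by case: ifP => _ /=.

have := sum_e J (fun _ => 1); under eq_bigr do rewrite mulr1; by [].
Qed.

Lemma separation : ~ K v y -> exists z : 'rV[R]_m, exists d, 0 < d /\ forall J, admissible v J -> dotm (ind R J) z + d <= dotm y z.
Proof.
move=> nK.
have [I0 aI0] := exists_adm hfull.
have Dne : Dl !=set0 by exists (e I0); apply: e_in.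
have [ws wsD wmin] := EVT_min_rV Dne Dl_compact (continuous_subspaceT h_cont).
move: wsD; rewrite inE => -[wA w1].
have w0 k : 0 <= ws 0 k by have := wA k; rewrite /Aj; case: ifP => _ // ->.
set z := \row_i (y 0 i - q ws i).
set d := h ws.
have qK : K v (\row_i q ws i).
  exists (fun I => ws 0 (enum_rank I)); split.
  - by move=> I; apply: w0.
  - move=> I nI; have := wA (enum_rank I); rewrite /Aj /ev enum_rankK.
    by rewrite (negbTE nI).
  - by rewrite sum_ev -w1; apply: eq_bigr => j _; rewrite /ev enum_valK.
  - apply/rowP => i; rewrite mxE summxE sum_ev; apply: eq_bigr => j _.
    by rewrite /cij /ev !mxE enum_valK.
have d0 : 0 < d.
  rewrite lt_def sumr_ge0 ?andbT; last by move=> i _; rewrite sqr_ge0.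
  apply/negP => /eqP dz; apply: nK.
  have -> : y = \row_i q ws i; last exact: qK.
  apply/rowP => i; rewrite mxE; apply/eqP; rewrite -subr_eq0 -sqrf_eq0; apply/eqP.
  by apply: (psumr_eq0P _ dz) => // k _; rewrite sqr_ge0.
exists z, d; split => // J aJ.
set A := \sum_i z 0 i * (ind R J 0 i - q ws i).
set B := \sum_i (ind R J 0 i - q ws i) ^+ 2.
have B0 : 0 <= B by apply: sumr_ge0 => i _; rewrite sqr_ge0.
have var t : 0 < t -> t <= 1 -> 0 <= t ^+ 2 * B - 2 * t * A.
  move=> t0 t1.
  pose wt : 'rV[R]_N := \row_j ((1 - t) * ws 0 j + t * e J 0 j).
  have wtD : Dl wt.
    have [eA e1] := e_in aJ; split.
      move=> j; rewrite /Aj mxE; have := wA j; have := eA j; rewrite /Aj.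
      case: ifP => _.
        move=> /= h1 h2; apply: addr_ge0; apply: mulr_ge0 => //; lra.
      by move=> /= -> ->; rewrite !mulr0 addr0.
    rewrite (eq_bigr (fun j => (1 - t) * ws 0 j + t * e J 0 j)); last by move=> j _; rewrite mxE.
    by rewrite big_split /= -!mulr_sumr w1 e1; ring.
  have := wmin wt; rewrite inE => /(_ wtD).
  have qwt i : q wt i = (1 - t) * q ws i + t * ind R J 0 i.
    rewrite /q (eq_bigr (fun j => (1 - t) * (ws 0 j * cij j i) + t * (e J 0 j * cij j i))); last first.
      by move=> j _; rewrite mxE; ring.
    by rewrite big_split /= -!mulr_sumr sum_e /cij /ev enum_rankK.
  have -> : h wt = h ws + (t ^+ 2 * B - 2 * t * A).
    rewrite /h /A /B !mulr_sumr -sumrB -big_split /=; apply: eq_bigr => i _.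
    by rewrite qwt /z !mxE; ring.
  rewrite -/d; lra.
have A0 : A <= 0.
  rewrite leNgt; apply/negP => Ap.
  set t := A / (A + B).
  have ABp : 0 < A + B by lra.
  have t0 : 0 < t by rewrite divr_gt0.
  have t1 : t <= 1 by rewrite ler_pdivrMr // mul1r; lra.
  have tB : t * B <= A.
    by rewrite /t mulrAC ler_pdivrMr // ler_pM2l //; lra.
  have := var t t0 t1; nra.
have -> : dotm y z = d + dotm (ind R J) z - A.
  rewrite /dotm /d /h /A -big_split -sumrB /=; apply: eq_bigr => i _.
  by rewrite /z !mxE; ring.
lra.
Qed.

End Sep.


Section Six.
Variables (R : realType) (n m : nat) (v : 'I_m -> 'cV[R]_n).
Hypothesis hfull : row_full (\matrix_(i < m) (v i)^T).

Lemma cI_nadm I : ~~ admissible v I -> cI v I = 0.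
Proof. by move=> nI; apply/eqP; apply: contraNT nI; rewrite cI_neq0. Qed.

Lemma cI_gt0 I : admissible v I -> 0 < cI v I.
Proof. by move=> aI; rewrite lt_def cI_neq0 aI cI_ge0. Qed.

Lemma dotm_ones (I : {set 'I_m}) : dotm (ind R I) (const_mx 1) = #|I|%:R.
Proof. by rewrite dot_ind; under eq_bigr do rewrite mxE; rewrite sumr_const. Qed.

Lemma dotmD2 (a x y : 'rV[R]_m) : dotm a (x + y) = dotm a x + dotm a y.
Proof. by rewrite /dotm -big_split; apply: eq_bigr => i _; rewrite mxE mulrDr. Qed.

Lemma Fx_shift (x : 'rV[R]_m) s :
  Fx v (x + s *: const_mx 1) = expR (s * n%:R) * Fx v x.
Proof.
rewrite /Fx mulr_sumr; apply: eq_bigr => I _.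
case aI : (admissible v I); last by rewrite cI_nadm ?aI // !mul0r mulr0.
rewrite dotmD2 dotmZr dotm_ones.
by move: aI => /andP [/eqP -> _]; rewrite expRD; ring.
Qed.

Lemma gc_shift (c x : 'rV[R]_m) s : \sum_(i < m) c 0 i = n%:R ->
  gc v c (x + s *: const_mx 1) = gc v c x.
Proof.
move=> hc; rewrite /gc !phiE Fx_shift lnM ?posrE ?expR_gt0 ?Fx_gt0 // expRK.
rewrite dotmD2 dotmZr /dotm.
have -> : \sum_(i < m) c 0 i * (const_mx 1 : 'rV[R]_m) 0 i = n%:R.
  by rewrite -hc; apply: eq_bigr => i _; rewrite mxE mulr1.
ring.
Qed.

Lemma K_dot_le (y x : 'rV[R]_m) B : K v y ->
  (forall I, admissible v I -> dotm (ind R I) x <= B) -> dotm y x <= B.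
Proof.
case=> w [w0 wn w1 ->] hB; rewrite dotm_suml.
rewrite -[B]mul1r -w1 mulr_suml; apply: ler_sum => I _.
case aI : (admissible v I); last by rewrite wn ?aI // !mul0r.
by apply: ler_wpM2l => //; apply: hB.
Qed.

Lemma gc_dep (c x x' : 'rV[R]_m) : K v c ->
  (forall I, admissible v I -> dotm (ind R I) x = dotm (ind R I) x') ->
  gc v c x = gc v c x'.
Proof.
case=> w [w0 wn w1 ->] he; rewrite /gc !phiE !dotm_suml.
have -> : Fx v x = Fx v x'.
  apply: eq_bigr => I _; case aI : (admissible v I).
    by rewrite he.
  by rewrite cI_nadm ?aI // !mul0r.
congr (_ - _); apply: eq_bigr => I _; case aI : (admissible v I).
  by rewrite he.
by rewrite wn ?aI // !mul0r.
Qed.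

Lemma sum_delta_f (T : finType) (a : T) (F : T -> R) :
  \sum_(x : T) (x == a)%:R * F x = F a.
Proof.
rewrite (bigD1 a) //= eqxx mul1r big1 ?addr0 // => x /negPf ->; by rewrite mul0r.
Qed.

Lemma sum_delta1 (T : finType) (a : T) : \sum_(x : T) (x == a)%:R = 1 :> R.
Proof.
rewrite (bigD1 a) //= eqxx big1 ?addr0 // => x /negPf ->; by [].
Qed.

Lemma relint_shift (c : 'rV[R]_m) : relint_K v c -> exists d : R, 0 < d /\
  forall L J, admissible v L -> admissible v J -> K v (c + d *: (ind R L - ind R J)).
Proof.
move=> [[w [w0 wn w1 ec]] [e [e0 he]]].
have d0 : 0 < e / 2 by rewrite divr_gt0.
exists (e / 2); split => // L J aL aJ; apply: he.
  exists (fun I => w I + e / 2 * ((I == L)%:R - (I == J)%:R)); split.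
  - move=> I nI; rewrite wn //.
    have -> : (I == L) = false by apply/negP => /eqP eL; move: nI; rewrite eL aL.
    have -> : (I == J) = false by apply/negP => /eqP eL; move: nI; rewrite eL aJ.
    by rewrite subrr mulr0 addr0.
  - rewrite big_split /= w1 -mulr_sumr sumrB.
    by rewrite !sum_delta1 subrr mulr0 addr0.
  - apply/rowP => i; rewrite ec !mxE !summxE; apply/esym.
    rewrite (eq_bigr (fun I => w I * ind R I 0 i + e / 2 * ((I == L)%:R * ind R I 0 i) -
        e / 2 * ((I == J)%:R * ind R I 0 i))); last by move=> I _; rewrite !mxE; ring.
    rewrite sumrB big_split /= -!mulr_sumr !sum_delta_f.
    rewrite [in RHS](eq_bigr (fun I => w I * ind R I 0 i)); last by move=> I _; rewrite !mxE.
    by rewrite !mxE; ring.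
move=> i; rewrite !mxE addrAC subrr add0r normrM gtr0_norm //.
have hd : `|(i \in L)%:R - (i \in J)%:R| <= 1 :> R.
  by case: (i \in L); case: (i \in J); rewrite /= ?subrr ?subr0 ?sub0r ?normrN ?normr0 ?normr1 ?ler01 ?lexx.
apply: (@le_lt_trans _ _ (e / 2)); first by rewrite -[leRHS]mulr1; apply: ler_wpM2l => //; apply: ltW.
lra.
Qed.

End Six.


Section Attain.
Variables (R : realType) (n m : nat) (v : 'I_m -> 'cV[R]_n).
Hypothesis hfull : row_full (\matrix_(i < m) (v i)^T).

Lemma dotm_cont (a : 'rV[R]_m) : continuous (fun x : 'rV[R]_m => dotm a x).
Proof.
apply: cont_sum => i x; apply: continuousM; first exact: cst_continuous.
exact: cont_coord.
Qed.

Lemma Fx_cont : continuous (Fx v).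
Proof.
apply: (@cont_sum _ _ _ _ (fun I x => cI v I * expR (dotm (ind R I) x))) => I x.
have h1 := @cst_continuous _ R (cI v I) x.
have hd : {for x, continuous (fun y => dotm (ind R I) y)} by apply: dotm_cont.
have he : {for dotm (ind R I) x, continuous (@expR R)} by apply: continuous_expR.
have h2 := continuous_comp hd he.
exact: (continuousM h1 h2).
Qed.

Lemma gc_cont (c : 'rV[R]_m) : continuous (gc v c).
Proof.
have -> : gc v c = fun x => dotm c x - ln (Fx v x).
  by apply: funext => x; rewrite /gc phiE.
move=> x; apply: continuousB; first exact: dotm_cont.
have h1 : {for x, continuous (Fx v)} by apply: Fx_cont.
have h2 : {for Fx v x, continuous (@ln R)} by apply: continuous_ln; apply: Fx_gt0.
exact: (continuous_comp h1 h2).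
Qed.

Variable c : 'rV[R]_m.
Hypothesis hcs : \sum_(i < m) c 0 i = n%:R.
Hypothesis hrel : relint_K v c.
Hypothesis hn : (0 < n)%N.

Let g := gc v c.
Let Kc : K v c := hrel.1.

Let kap := \sum_(I : {set 'I_m}) `|ln (cI v I)|.

Lemma aI_le x I : admissible v I -> dotm (ind R I) x <= ln (Fx v x) + kap.
Proof.
move=> aI; have cp := cI_gt0 aI.
have hF := Fx_gt0 hfull x.
have cp2 : 0 < cI v I * expR (dotm (ind R I) x) by rewrite mulr_gt0 ?expR_gt0.
have : ln (cI v I) + dotm (ind R I) x <= ln (Fx v x).
  rewrite -[dotm _ x]expRK -lnM ?posrE ?expR_gt0 // ler_ln ?posrE //.
  exact: Fx_ge.
have : `|ln (cI v I)| <= kap.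
  by rewrite /kap (bigD1 I) //= lerDl sumr_ge0 // => J _; apply: normr_ge0.
have hh2 : - ln (cI v I) <= `|ln (cI v I)| by rewrite -normrN ler_norm.
lra.
Qed.

Variable d : R.
Hypothesis hd0 : 0 < d.
Hypothesis hdK : forall L J, admissible v L -> admissible v J ->
  K v (c + d *: (ind R L - ind R J)).

Lemma dotm_lin (a b x : 'rV[R]_m) :
  dotm (c + d *: (a - b)) x = dotm c x + d * (dotm a x - dotm b x).
Proof.
rewrite /dotm -sumrB mulr_sumr -big_split /=; apply: eq_bigr => i _.
by rewrite !mxE; ring.
Qed.

Lemma spread x L J : admissible v L -> admissible v J ->
  d * (dotm (ind R L) x - dotm (ind R J) x) <= kap - g x.
Proof.
move=> aL aJ.
have := K_dot_le (hdK aL aJ) (fun I aI => @aI_le x I aI).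
rewrite dotm_lin /g /gc phiE; lra.
Qed.

Let N := #|{set 'I_m}|.
Let ev (j : 'I_N) : {set 'I_m} := enum_val j.
Let Cm : 'M[R]_(m, N) :=
  \matrix_(i, j) (if admissible v (ev j) then ind R (ev j) 0 i else 0).

Lemma mulCm (u : 'rV[R]_m) j :
  (u *m Cm) 0 j = if admissible v (ev j) then dotm (ind R (ev j)) u else 0.
Proof.
rewrite mxE; under eq_bigr do rewrite mxE.
case: ifP => _; last by rewrite big1 // => i _; rewrite mulr0.
by apply: eq_bigr => i _; rewrite mulrC.
Qed.

Let S := (kap - g 0) / d.
Let Pm := pinvmx Cm.
Let R0 := `|S| * \sum_j \sum_i `|Pm j i|.

Lemma R0_ge0 : 0 <= R0.
Proof. by rewrite /R0 mulr_ge0 // sumr_ge0 // => j _; rewrite sumr_ge0. Qed.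

Lemma reduce x : g 0 <= g x ->
  exists x2 : 'rV[R]_m, (forall i, `|x2 0 i| <= R0) /\ g x2 = g x.
Proof.
move=> hx.
have [I0 aI0] := exists_adm hfull.
have nz : n%:R != 0 :> R by rewrite pnatr_eq0 -lt0n.
set s := - dotm (ind R I0) x / n%:R.
set x1 := x + s *: const_mx 1.
have gx1 : g x1 = g x by rewrite /g gc_shift.
have a1 I : admissible v I -> dotm (ind R I) x1 = dotm (ind R I) x - dotm (ind R I0) x.
  move=> /andP [/eqP cI _]; rewrite dotmD2 dotmZr dotm_ones cI /s.
  by rewrite -mulrA mulVf // mulr1.
have bd I : admissible v I -> `|dotm (ind R I) x1| <= S.
  move=> aI; rewrite a1 //.
  have h1 := spread x aI aI0; have h2 := spread x aI0 aI.
  set df := dotm (ind R I) x - dotm (ind R I0) x in h1 *.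
  have e1 : df * d <= kap - g 0 by nra.
  have e2 : (- df) * d <= kap - g 0 by rewrite /df; nra.
  rewrite ler_norml /S; apply/andP; split.
    by rewrite lerNl ler_pdivlMr.
  by rewrite ler_pdivlMr.
set al := x1 *m Cm.
have bal j : `|al 0 j| <= `|S|.
  rewrite /al mulCm; case: ifP => aj.
    by apply: le_trans (bd _ aj) _; apply: ler_norm.
  by rewrite normr0.
set x2 := al *m Pm.
have x2C : x2 *m Cm = al by rewrite /x2 /al /Pm mulmxKpV // submxMl.
exists x2; split.
  move=> i; rewrite /x2 mxE.
  apply: (le_trans (ler_norm_sum _ _ _)).
  apply: (@le_trans _ _ (\sum_j `|S| * `|Pm j i|)).
    by apply: ler_sum => j _; rewrite normrM ler_wpM2r.
  rewrite -mulr_sumr /R0 ler_wpM2l //; apply: ler_sum => j _.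
  by rewrite (bigD1 i) //= lerDl sumr_ge0.
rewrite -gx1 /g; apply: gc_dep => // I aI.
have := congr1 (fun M : 'rV[R]_N => M 0 (enum_rank I)) x2C.
by rewrite /= /al !mulCm /ev enum_rankK aI.
Qed.

Lemma attain : exists x, phistar v c = (gc v c x)%:E.
Proof.
set B := [set w : 'rV[R]_m | forall i, w ord0 i \in `[(- R0), R0]].
have Bc : compact B.
  apply: (@rV_compact _  _ (fun=> `[(- R0), R0]%classic)).
  by move=> _; apply: segment_compact.
have r0 := R0_ge0.
have B0 : B 0 by move=> i; rewrite mxE in_itv /=; apply/andP; split; lra.
have gcc : continuous (gc v c) by apply: gc_cont.
have [xs xsB xmax] := EVT_max_rV (ex_intro _ 0 B0) Bc (continuous_subspaceT gcc).
have inB (x : 'rV[R]_m) : (forall i, `|x 0 i| <= R0) -> x \in B.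
  by move=> h; rewrite in_setE => i; rewrite in_itv /= -ler_norml; apply: h.
have all (x : 'rV[R]_m) : g x <= g xs.
  case: (leP (g 0) (g x)) => hx.
    have [x2 [b2 e2]] := reduce hx; rewrite -e2; apply: xmax; exact: inB.
  apply: (le_trans (ltW hx)); apply: xmax; rewrite in_setE; exact: B0.
exists xs; apply/eqP; rewrite eq_le; apply/andP; split.
  by apply: ge_ereal_sup => _ [x _ <-]; rewrite lee_fin; apply: all.
by apply: ereal_sup_ubound; exists xs.
Qed.

End Attain.

Unset Implicit Arguments.


Theorem proposition6 (R : realType) (n m : nat) (v : 'I_m -> 'cV[R]_n)
  (c : 'rV[R]_m) :
  (forall i, v i != 0) ->
  row_full (\matrix_(i < m) (v i)^T) ->
  (n <= m)%N ->
  (forall i, 0 < c 0 i) ->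
  \sum_(i < m) c 0 i = n%:R ->
  ((* (1) *)
      (forall (x y : 'rV[R]_m) (t : R), 0 <= t -> t <= 1 ->
         phi v (t *: x + (1 - t) *: y) <= t * phi v x + (1 - t) * phi v y)) /\
      (* (2) *)
      (Dc v c)%:E = expeR (- phistar v c)%E /\
      (* (3) *)
      (0 < Dc v c <-> (phistar v c < +oo)%E) /\
      (* (4) *)
      ((exists lam, posvec lam /\ Dratio v c lam = Dc v c) <->
       (exists x, phistar v c = (dotm c x - phi v x)%:E)) /\
      (* (5) *)
      (forall y, (phistar v y < +oo)%E <-> K v y) /\
      (* (6) *)
      (relint_K v c -> exists lam, posvec lam /\ Dratio v c lam = Dc v c).
Proof.
move=> hv hfull hnm hc hcs.
split; first by move=> x y t t0 t1; apply: phi_convex.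
split; first exact: part2.
split; first exact: part3.
split; first exact: part4.
split.
  move=> y; split; last exact: K_bounded.
  move=> hl; apply: contrapT => nK.
  exact: (unbounded_notK hfull (separation hfull nK) hl).
move=> hrel; apply/(part4 hfull); rewrite -/(gc v c _).
case: (posnP n) => [n0|npos].
  have m0 : m = 0%N.
    case: (posnP m) => // mpos; exfalso.
    have := hcs; rewrite n0 (bigD1 (Ordinal mpos)) //= => e.
    have : 0 < c 0 (Ordinal mpos) + \sum_(i < m | i != Ordinal mpos) c 0 i.
      by rewrite ltr_pwDl // sumr_ge0 // => i _; apply: ltW.
    by rewrite e ltxx.
  have x0 (x : 'rV[R]_m) : x = 0.
    apply/rowP => i; exfalso; have := ltn_ord i; move: (nat_of_ord i) => k.
    by rewrite m0.
  exists 0; apply/eqP; rewrite eq_le; apply/andP; split.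
    by apply: ge_ereal_sup => _ [x _ <-]; rewrite (x0 x).
  by apply: ereal_sup_ubound; exists 0.
have [d [d0 hdK]] := relint_shift hrel.
have := attain hfull hcs hrel npos d0 hdK.
by move=> [x ->]; exists x.
Qed.
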